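(* Let $X$ be a separable real Banach space and let $(\Omega,\beta,\mu)$ be a complete probability measure space. Let $T:\Omega\times X\to X$ be a continuous random mapping such that there are real-valued random variables $\alpha_2,\alpha_3:\Omega\to[0,\infty)$ with $\alpha_2(\omega)+\alpha_3(\omega)<1$ for all $\omega\in\Omega$ and, for every $\omega\in\Omega$ and all $X$-valued random variables $x_1,x_2:\Omega\to X$, $$\|T(\omega,x_1(\omega))-T(\omega,x_2(\omega))\|\le \alpha_2(\omega)\|x_1(\omega)-T(\omega,x_1(\omega))\|+\alpha_3(\omega)\|x_2(\omega)-T(\omega,x_2(\omega))\|.$$ Then $T$ has a random fixed point, and it is unique (any two random fixed points of $T$ coincide almost surely).
   Context: An $X$-valued random variable is a map $x:\Omega\to X$ such that $x^{-1}(B)\in\beta$ for every Borel set $B\subseteq X$. A random mapping is a map $T:\Omega\times X\to X$ such that $\omega\mapsto T(\omega,x)$ is an $X$-valued random variable for every fixed $x\in X$. A random mapping $T$ is continuous if the set of $\omega\in\Omega$ for which $x\mapsto T(\omega,x)$ is continuous has $\mu$-measure one. A random fixed point of $T$ is an $X$-valued random variable $x$ with $\mu\{\omega\in\Omega: T(\omega,x(\omega))=x(\omega)\}=1$. *)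

(* Defs.v *)
From HB Require Import structures.
From mathcomp Require Import all_boot all_order all_algebra.
From mathcomp Require Import all_classical all_reals all_analysis.
Set Implicit Arguments. Unset Strict Implicit. Unset Printing Implicit Defensive.
Import Order.TTheory GRing.Theory Num.Theory.
Import numFieldNormedType.Exports.
Local Open Scope classical_set_scope.
Local Open Scope ring_scope.

Definition borel_set (X : topologicalType) (B : set X) : Prop := <<s open >> B.

Definition separable_space (X : topologicalType) : Prop :=
  exists D : set X, countable D /\ closure D = setT.

Definition X_random_variable d (Omega : measurableType d) (X : topologicalType)
  (x : Omega -> X) : Prop :=
  forall B : set X, borel_set B -> measurable (x @^-1` B).

Definition random_mapping d (Omega : measurableType d) (X : topologicalType)
  (T : Omega -> X -> X) : Prop :=
  forall x : X, X_random_variable (fun w => T w x).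

Definition continuous_random_mapping d (Omega : measurableType d) (R : realType)
  (mu : probability Omega R) (X : topologicalType) (T : Omega -> X -> X) : Prop :=
  random_mapping T /\
  measurable [set w | continuous (T w)] /\
  mu [set w | continuous (T w)] = 1%E.

Definition random_fixed_point d (Omega : measurableType d) (R : realType)
  (mu : probability Omega R) (X : topologicalType) (T : Omega -> X -> X)
  (x : Omega -> X) : Prop :=
  X_random_variable x /\
  measurable [set w | T w (x w) = x w] /\
  mu [set w | T w (x w) = x w] = 1%E.

(* Main.v *)
Require Import Defs.
From HB Require Import structures.
From mathcomp Require Import all_boot all_order all_algebra.
From mathcomp Require Import all_classical all_reals all_analysis.
From mathcomp Require Import ring lra.
Import Order.TTheory GRing.Theory Num.Theory.
Import numFieldNormedType.Exports.
Local Open Scope classical_set_scope.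
Local Open Scope ring_scope.

Lemma kannan (R : realType) (X : completeNormedModType R) (K : X -> X) (a b : R) :
  0 <= a -> 0 <= b -> a + b < 1 ->
  (forall x y, `|K x - K y| <= a * `|x - K x| + b * `|y - K y|) ->
  exists p, K p = p.
Proof.
move=> a0 b0 ab1 HK.
pose f x := `|x - K x|.
have f0 x : 0 <= f x by rewrite /f normr_ge0.
pose q := a / (1 - b).
have b1 : 0 < 1 - b by lra.
have q0 : 0 <= q by rewrite /q divr_ge0 // ltW.
have q1 : q < 1 by rewrite /q ltr_pdivrMr // mul1r; lra.
have step x : f (K x) <= q * f x.
  have := HK x (K x); rewrite -/(f x) -/(f (K x)) => H.
  rewrite /q mulrAC ler_pdivlMr //; lra.
pose u n := iter n K 0.
have fu n : f (u n) <= q ^+ n * f (u 0%N).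
  elim: n => [|n IH]; first by rewrite expr0 mul1r.
  rewrite /u iterS -/(u n) exprS -mulrA.
  apply: le_trans (step _) _; apply: ler_wpM2l => //.
have fu_small e : 0 < e -> \forall n \near \oo, f (u n) < e.
  move=> e0.
  have nq : `|q| < 1 by rewrite ger0_norm.
  have ef : 0 < e / (f (u 0%N) + 1) by rewrite divr_gt0 // ltr_wpDl.
  have H := @cvgr0_norm_lt _ _ _ _ _ _ (cvg_expr nq) _ ef.
  have [N _ HN] := H _.
  exists N => // n /= Nn; have := HN n Nn.
  rewrite ger0_norm ?exprn_ge0 // ltr_pdivlMr ?ltr_wpDl // => Hn.
  have := fu n; have := f0 (u 0%N); have := exprn_ge0 n q0; nra.
pose w n := K (u n).
have wu n : w n = u n.+1 by rewrite /w /u iterS.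
have cw : cvg (w @ \oo).
  apply/cauchy_cvgP; apply: cauchy_exP => e e0.
  have e2 : 0 < e / 2 by rewrite divr_gt0.
  have [N _ HN] := fu_small (e / 2) e2.
  exists (w N) => /=; exists N => // n /= Nn.
  rewrite -ball_normE /ball_ /=.
  have := HK (u N) (u n); rewrite -/(f (u N)) -/(f (u n)) => H.
  have := HN N (leqnn N); have := HN n Nn; rewrite /w.
  have := f0 (u N); have := f0 (u n); nra.
exists (lim (w @ \oo)).
set p := lim _.
have wp : w @ \oo --> p by [].
suff : f p = 0 by move/eqP; rewrite normr_eq0 subr_eq0 => /eqP.
apply/eqP; rewrite eq_le f0 andbT; apply/negP => /negP; rewrite -ltNge => fp.
pose e := (1 - b) * f p / 4.
have e0 : 0 < e by rewrite /e divr_gt0 // mulr_gt0.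
have H1 := @cvgr_dist_lt _ _ _ _ _ _ _ wp _ e0.
have [N1 _ HN1] := H1.
have [N2 _ HN2] := fu_small e e0.
pose N := maxn N1 N2.
have h1 := HN1 N (leq_maxl _ _).
have h2 := HN2 N (leq_maxr _ _).
have H := HK (u N) p; rewrite -/(f (u N)) -/(f p) in H.
have tri : f p <= `|p - w N| + `|K (u N) - K p|.
  by rewrite /f /w (_ : p - K p = (p - K (u N)) + (K (u N) - K p)) ?ler_normD // subrKA.
move: h1 h2 H tri; rewrite /e /w; have := f0 (u N); nra.
Qed.

Theorem corollary3p4 (R : realType) (X : completeNormedModType R)
  (d : measure_display) (Omega : measurableType d) (mu : probability Omega R)
  (T : Omega -> X -> X) (alpha2 alpha3 : Omega -> R) :
  separable_space X ->
  measure_is_complete mu ->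
  continuous_random_mapping mu T ->
  measurable_fun setT alpha2 -> measurable_fun setT alpha3 ->
  (forall w, 0 <= alpha2 w) -> (forall w, 0 <= alpha3 w) ->
  (forall w, alpha2 w + alpha3 w < 1) ->
  (forall w (x1 x2 : Omega -> X),
      X_random_variable x1 -> X_random_variable x2 ->
      `|T w (x1 w) - T w (x2 w)| <=
        alpha2 w * `|x1 w - T w (x1 w)| + alpha3 w * `|x2 w - T w (x2 w)|) ->
  (exists x : Omega -> X, random_fixed_point mu T x) /\
  (forall x y : Omega -> X, random_fixed_point mu T x -> random_fixed_point mu T y ->
     {ae mu, forall w, x w = y w}).
Proof.
move=> [D [cD dD]] _ [rmT _] _ _ a2 a3 a23 HT.
have cst (c : X) : X_random_variable (fun _ : Omega => c).
  move=> B _; have [Bc|nBc] := pselect (B c).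
    rewrite (_ : _ @^-1` _ = setT); first exact: measurableT.
    by apply/seteqP; split => w //=.
  rewrite (_ : _ @^-1` _ = set0); first exact: measurable0.
  by apply/seteqP; split => w //=.
have HK w a b : `|T w a - T w b| <= alpha2 w * `|a - T w a| + alpha3 w * `|b - T w b|.
  by have := HT w (fun _ => a) (fun _ => b) (cst a) (cst b).
have uniq w a b : T w a = a -> T w b = b -> a = b.
  move=> Ta Tb; have := HK w a b; rewrite Ta Tb !subrr normr0 !mulr0 addr0.
  by rewrite normr_le0 subr_eq0 => /eqP.
split; last first.
  move=> x y [_ [mx px]] [_ [my py]].
  have aefix (z : Omega -> X) : measurable [set w | T w (z w) = z w] ->
      mu [set w | T w (z w) = z w] = 1%E -> {ae mu, forall w, T w (z w) = z w}.
    move=> mz pz; exists (~` [set w | T w (z w) = z w]); split => //.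
    - exact: measurableC.
    - by rewrite probability_setC // pz subee.
  move: (aefix x mx px) (aefix y my py); apply: filterS2 => w h1 h2.
  exact: uniq h1 h2.
have fixw w : exists p, T w p = p := @kannan R X (T w) _ _ (a2 w) (a3 w) (a23 w) (HK w).
pose x w := projT1 (cid (fixw w)).
have xP w : T w (x w) = x w := projT2 (cid (fixw w)).
exists x.
have fixT : [set w | T w (x w) = x w] = setT by apply/seteqP; split => w //= _.
split; last by rewrite fixT; split; [exact: measurableT | exact: probability_setT].
have openU U : open U -> measurable (x @^-1` U).
  move=> oU.
  pose r (m : nat) : R := (m.+1%:R)^-1.
  have r0 m : 0 < r m by rewrite /r invr_gt0 ltr0n.
  pose G m (c : {c : X | D c}) : set Omega :=
    if pselect (ball (sval c) (r m) `<=` U)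
    then [set w | `|sval c - T w (sval c)| < r m / 2] else set0.
  have E1 w c : `|c - x w| <= 2 * `|c - T w c|.
    have := HK w c (x w); rewrite xP subrr normr0 mulr0 addr0 => h.
    have := ler_distD (T w c) c (x w).
    have := a2 w; have := a3 w; have := a23 w; have := normr_ge0 (c - T w c); nra.
  have E2 w c : (1 - alpha3 w) * `|c - T w c| <= `|c - x w|.
    have := HK w (x w) c; rewrite xP subrr normr0 mulr0 add0r => h.
    have := ler_distD (x w) c (T w c).
    lra.
  have -> : x @^-1` U = \bigcup_m \bigcup_c G m c.
    apply/seteqP; split => w /=.
    - move=> Uxw.
      have : nbhs (x w) U by apply: open_nbhs_nbhs.
      move=> /nbhs_ballP [e /= e0 beU].
      pose m := Num.truncn (2 / e).
      have hm : r m < e / 2.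
        have h1 := Num.Theory.truncnS_gt (2 / e).
        rewrite /r -/m.
        have M0 : 0 < (m.+1)%:R :> R by rewrite ltr0n.
        have iM : (m.+1)%:R * (m.+1)%:R^-1 = 1 :> R by rewrite mulfV // gt_eqF.
        have iM0 : 0 < (m.+1)%:R^-1 :> R by rewrite invr_gt0.
        rewrite ltr_pdivrMr // in h1.
        move: h1 iM iM0 M0; rewrite -/m; set M := (m.+1)%:R; set iM := M^-1; nra.
      pose del := (1 - alpha3 w) * r m / 2.
      have a3' := a23 w; have a2' := a2 w.
      have del0 : 0 < del by rewrite /del divr_gt0 // mulr_gt0 // ?r0; lra.
      have : closure D (x w) by rewrite dD.
      move=> /(_ _ (nbhsx_ballx _ _ del0)) [c [Dc bc]].
      rewrite -ball_normE /= in bc.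
      exists m => //; exists (exist _ c Dc) => //.
      rewrite /G /=; case: pselect => [_|nb] /=.
      + have := E2 w c; rewrite (distrC c (x w)).
        move: bc; rewrite /del => bc h.
        have := r0 m; have := a3 w; have := normr_ge0 (c - T w c); nra.
      + exfalso; apply: nb => y; rewrite -ball_normE /= => hy.
        apply: beU; rewrite -ball_normE /=.
        have := ler_distD c (x w) y.
        have : del <= r m / 2 by rewrite /del; have := r0 m; have := a3 w; nra.
        lra.
    - move=> [m _ [c _]]; rewrite /G; case: pselect => // bU /= hc.
      apply: bU; rewrite -ball_normE /=.
      have := E1 w (sval c); lra.
  apply: bigcupT_measurable => m; apply: countable_bigcupT_measurable.
    move/countable_injP: cD => [f injf].
    apply/countable_injP; exists (fun u => f (sval u)).
    move=> u v _ _; case: u => u Du; case: v => v Dv /= h.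
    have uv : u = v by apply: injf; rewrite ?inE.
    subst v; congr exist; exact: Prop_irrelevance.
  move=> c; rewrite /G; case: pselect => hb /=; last exact: measurable0.
  have := rmT (sval c) (ball (sval c) (r m / 2)) (sub_gen_smallest (ball_open _ _)).
  by rewrite /= -ball_normE.
move=> B; rewrite /borel_set => hB.
have SA := sigma_algebra_image x (@sigma_algebra_measurable _ Omega).
have := smallest_sub SA _ hB; rewrite /image_set_system /= setTI; apply.
by move=> U oU /=; rewrite setTI; exact: openU.
Qed.
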